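(* Let $p$ be a binary word of length $l$ with $r\le 3$ runs. For every $n\ge l$ there exists a $p$-optimal binary word of length $n$ having exactly $r$ runs.
   Context: $c_p(w)$ is the number of occurrences of $p$ as a (not necessarily consecutive) subsequence of $w$. $M_{n,p}=\max\{c_p(w): w\in\{0,1\}^n\}$; a binary word $w$ of length $n$ is $p$-optimal if $c_p(w)=M_{n,p}$. A run is a maximal block of consecutive equal letters. *)

(* Defs.v *)
From mathcomp Require Import all_boot.
Set Implicit Arguments. Unset Strict Implicit. Unset Printing Implicit Defensive.

(* Binary words are bitseq = seq bool (false = 0, true = 1). *)

(* c_p(w): number of occurrences of p as a (not necessarily consecutive)
   subsequence of w, i.e. the number of index selections (bit masks of
   length |w|) picking out p. *)
Definition occ (p w : bitseq) : nat :=
  #|[set m : (size w).-tuple bool | mask m w == p]|.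

Definition runs (w : bitseq) : nat :=
  match w with
  | [::] => 0
  | x :: s => (count id (pairmap (fun a b => a != b) x s)).+1
  end.

Definition optimal (p w : bitseq) : Prop :=
  forall w' : bitseq, size w' = size w -> occ p w' <= occ p w.

(* Main.v *)
Require Import Defs.
From mathcomp Require Import all_boot zify.
Set Implicit Arguments. Unset Strict Implicit. Unset Printing Implicit Defensive.

Fixpoint cnt (p w : bitseq) : nat :=
  match w with
  | [::] => (p == [::])
  | x :: w' => cnt p w' + (if p is y :: p' then (x == y) * cnt p' w' else 0)
  end.

Lemma card_set_sum (T : finType) (P : pred T) : #|[set t | P t]| = \sum_t P t.
Proof. by rewrite -sum1dep_card big_mkcond. Qed.

Lemma cardS n (P : pred bitseq) :
  #|[set t : n.+1.-tuple bool | P t]| =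
  #|[set t : n.-tuple bool | P (true :: t)]| + #|[set t : n.-tuple bool | P (false :: t)]|.
Proof.
rewrite !card_set_sum.
pose h := fun u : bool * n.-tuple bool => [tuple of u.1 :: u.2].
rewrite (reindex h) /=; last first.
  exists (fun t : n.+1.-tuple bool => (thead t, [tuple of behead t])).
    by move=> [b t] _; rewrite /h /= theadE; congr pair; apply: val_inj.
  by move=> t _; rewrite /h /=; rewrite [RHS]tuple_eta.
rewrite -(pair_bigA _ (fun b t => P (b :: tval t) : nat)) /=.
by rewrite big_bool.
Qed.

Lemma occE p w : occ p w = cnt p w.
Proof.
elim: w p => [|x w IH] p.
  rewrite /occ card_set_sum /=.
  rewrite (eq_bigr (fun _ => nat_of_bool (p == [::]))); last first.
    by move=> t _; rewrite (tuple0 t) /= eq_sym.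
  by rewrite sum_nat_const -[#|_|]/#|{:0.-tuple bool}| card_tuple mul1n.
rewrite /occ /= (cardS (size w) (fun s => mask s (x :: w) == p)) /= addnC.
congr addn; first exact: IH.
case: p => [|y p].
  by apply/eqP; rewrite cards_eq0; apply/eqP/setP => t; rewrite !inE.
rewrite -IH /occ.
case: (x =P y) => [->|nxy] /=.
  by rewrite mul1n; apply: eq_card => t; rewrite !inE eqseq_cons eqxx.
by rewrite mul0n; apply/eqP; rewrite cards_eq0; apply/eqP/setP => t; rewrite !inE eqseq_cons; case: (x =P y).
Qed.

Lemma cnt_bound a p w :
  cnt p w <= 'C(count_mem a w, count_mem a p) * 'C(count_mem (~~a) w, count_mem (~~a) p).
Proof.
elim: w p => [|x w IH] [|y p] //=.
  by rewrite addn0; have := IH [::]; rewrite /= !bin0.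
have h1 := IH (y :: p); have h2 := IH p.
clear IH; case: a h1 h2; case: x; case: y => /= h1 h2;
  rewrite ?add1n ?add0n ?mul1n ?mul0n ?addn0 in h1 h2 *;
  try (rewrite binS mulnDl; exact: leq_add);
  try (rewrite binS mulnDr; exact: leq_add);
  try (apply: (leq_trans h1); apply: leq_mul => //; exact: leq_bin2l).
Qed.

Lemma cnt_nseq_cat a i q x v : 'C(x, i) * cnt q v <= cnt (nseq i a ++ q) (nseq x a ++ v).
Proof.
elim: x i => [|x IH] [|i] //=.
- by rewrite mul1n.
- by rewrite mul1n; apply: leq_trans (leq_addr _ _); have := IH 0; rewrite bin0 mul1n.
- rewrite eqxx mul1n binS mulnDl; apply: leq_add; [exact: (IH i.+1) | exact: IH].
Qed.

Lemma cnt_split a i q g w2 :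
  cnt (nseq i a ++ ~~a :: q) (nseq g a ++ ~~a :: w2) =
  cnt (nseq i a ++ ~~a :: q) (nseq g a ++ w2) + 'C(g, i) * cnt q w2.
Proof.
elim: g i => [|g IH] [|i] /=.
- by rewrite eqxx mul1n.
- by case: a; rewrite /= mul0n.
- move: (IH 0) => /= ->; clear IH; case: a; rewrite /= ?mul0n ?addn0 bin0 mul1n //.
- rewrite eqxx !mul1n; move: (IH i.+1) => /= ->; rewrite (IH i) binS mulnDl; lia.
Qed.

Lemma cm_aa (a : bool) g : count_mem a (nseq g a) = g.
Proof. by rewrite count_nseq /= eqxx mul1n. Qed.
Lemma cm_na (a : bool) g : count_mem (~~a) (nseq g a) = 0.
Proof. by case: a; rewrite count_nseq. Qed.
Lemma cm_an (a : bool) g : count_mem a (nseq g (~~a)) = 0.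
Proof. by case: a; rewrite count_nseq. Qed.
Lemma cm_a_n (a : bool) s : count_mem a (~~a :: s) = count_mem a s.
Proof. by case: a. Qed.
Lemma cm_n_n (a : bool) s : count_mem (~~a) (~~a :: s) = (count_mem (~~a) s).+1.
Proof. by rewrite /= eqxx. Qed.

Lemma block (a : bool) p :
  exists i s, p = nseq i a ++ s /\ (s = [::] \/ exists t, s = ~~a :: t).
Proof.
elim: p => [|y p [i [s [-> H]]]]; first by exists 0, [::]; auto.
case: (y =P a) => [->|nya]; first by exists i.+1, s.
exists 0, (y :: nseq i a ++ s); split => //; right; exists (nseq i a ++ s).
by congr cons; case: a y nya {H} => [] [].
Qed.

Definition Mx i k N := \max_(x < N.+1) ('C(x, i) * 'C(N - x, k)).

Lemma main_bound (a : bool) i j k w : 0 < j ->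
  cnt (nseq i a ++ nseq j (~~a) ++ nseq k a) w <=
  'C(count_mem (~~a) w, j) * Mx i k (count_mem a w).
Proof.
case: j => // j _.
move e: (count_mem (~~a) w) => m.
have cP : count_mem (~~a) (nseq i a ++ nseq j.+1 (~~a) ++ nseq k a) = j.+1.
  by rewrite !count_cat cm_na cm_na cm_aa addn0.
elim: m w e => [|m IH] w e.
  apply: leq_trans (cnt_bound a _ _) _.
  by rewrite e cP bin0n muln0.
have [g [s [ew [es|[w2 es]]]]] := block a w; rewrite {}ew {}es in e *.
  by move: e; rewrite cats0 cm_na.
rewrite /= cnt_split.
have eN : count_mem a (nseq g a ++ ~~ a :: w2) = g + count_mem a w2.
  by rewrite count_cat cm_aa cm_a_n.
have e2 : count_mem (~~a) (nseq g a ++ w2) = m.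
  by move: e; rewrite !count_cat cm_na cm_n_n; case.
have e3 : count_mem a (nseq g a ++ w2) = g + count_mem a w2.
  by rewrite count_cat cm_aa.
have h1 := IH _ e2; rewrite e3 in h1.
have h2 := cnt_bound a (nseq j (~~ a) ++ nseq k a) w2.
rewrite !count_cat cm_an cm_aa cm_na cm_aa add0n addn0 in h2.
have em : count_mem (~~ a) w2 = m.
  by move: e; rewrite !count_cat cm_na cm_n_n; case.
rewrite em in h2.
have hg : 'C(g, i) * 'C(count_mem a w2, k) <= Mx i k (g + count_mem a w2).
  have lt : g < (g + count_mem a w2).+1 by rewrite ltnS leq_addr.
  by have := @leq_bigmax _ (fun x : 'I_(g + count_mem a w2).+1 => 'C(x, i) * 'C(g + count_mem a w2 - x, k)) (Ordinal lt); rewrite /= addKn.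
rewrite eN binS mulnDl; apply: leq_add => //.
apply: leq_trans (leq_mul (leqnn _) h2) _.
rewrite mulnA [_ * 'C(m, j)]mulnC; apply: leq_mul => //.
Qed.

Lemma runs_cons2 (x y : bool) s : runs (x :: y :: s) = (x != y) + runs (y :: s).
Proof. by rewrite /runs /= addnS. Qed.

Lemma runs_nseq (a : bool) i s : runs (nseq i.+1 a ++ s) = runs (a :: s).
Proof.
elim: i => [|i IH] //.
change (runs (a :: a :: (nseq i a ++ s)) = runs (a :: s)).
by rewrite runs_cons2 eqxx add0n.
Qed.

Lemma runs_alt (a : bool) t : runs (a :: ~~a :: t) = (runs (~~a :: t)).+1.
Proof. by rewrite runs_cons2; case: a. Qed.

Lemma runs_alt' (a : bool) t : runs (~~a :: a :: t) = (runs (a :: t)).+1.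
Proof. by rewrite runs_cons2; case: a. Qed.

Lemma runs1 (a : bool) x : runs (nseq x.+1 a) = 1.
Proof. by rewrite -[nseq _ _]cats0 runs_nseq. Qed.

Lemma runs3 (a : bool) x y z :
  runs (nseq x.+1 a ++ nseq y.+1 (~~a) ++ nseq z.+1 a) = 3.
Proof.
rewrite runs_nseq.
change (runs (a :: ~~a :: (nseq y (~~a) ++ nseq z.+1 a)) = 3).
rewrite runs_alt.
change ((runs (nseq y.+1 (~~a) ++ nseq z.+1 a)).+1 = 3).
rewrite runs_nseq.
change ((runs (~~a :: a :: nseq z a)).+1 = 3).
rewrite runs_alt'.
change ((runs (nseq z.+1 a)).+2 = 3).
by rewrite runs1.
Qed.

Lemma runs2 (a : bool) x y : runs (nseq x.+1 a ++ nseq y.+1 (~~a) ++ nseq 0 a) = 2.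
Proof.
rewrite runs_nseq cats0.
change (runs (a :: ~~a :: nseq y (~~a)) = 2).
rewrite runs_alt.
change ((runs (nseq y.+1 (~~a))).+1 = 2).
by rewrite runs1.
Qed.

Lemma classify p : 0 < size p -> runs p <= 3 ->
  exists a i j k, p = nseq i a ++ nseq j (~~a) ++ nseq k a /\ 0 < i /\
   ((j = 0 /\ k = 0 /\ runs p = 1) \/ (0 < j /\ k = 0 /\ runs p = 2) \/
    (0 < j /\ 0 < k /\ runs p = 3)).
Proof.
case: p => // y p _.
have [i [s [-> [->|[t ->]]]]] := block y p.
  move=> _; exists y, i.+1, 0, 0; split; first by rewrite /= !cats0.
  split => //; left; split => //; split => //; rewrite cats0; exact: (runs1 y i).
have [j [s2 [-> [->|[t2 ->]]]]] := block (~~y) t.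
  move=> _; exists y, i.+1, j.+1, 0; split; first by rewrite /= !cats0.
  split => //; right; left; split => //; split => //.
  rewrite cats0; change (runs (nseq i.+1 y ++ ~~y :: nseq j (~~y)) = 2).
  rewrite runs_nseq runs_alt; change ((runs (nseq j.+1 (~~y))).+1 = 2).
  by rewrite runs1.
rewrite negbK.
have [k [s3 [-> [->|[t3 ->]]]]] := block y t2.
  move=> _; exists y, i.+1, j.+1, k.+1; split; first by rewrite /= !cats0.
  split => //; right; right; split => //; split => //.
  rewrite cats0; exact: (runs3 y i j k).
move=> hr; exfalso; move: hr.
change (runs (nseq i.+1 y ++ ~~y :: (nseq j (~~y) ++ y :: (nseq k y ++ ~~y :: t3))) <= 3 -> False).
rewrite runs_nseq runs_alt.
change ((runs (nseq j.+1 (~~y) ++ y :: (nseq k y ++ ~~y :: t3))).+1 <= 3 -> False).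
rewrite runs_nseq runs_alt'.
change ((runs (nseq k.+1 y ++ ~~y :: t3)).+2 <= 3 -> False).
by rewrite runs_nseq runs_alt /runs.
Qed.

Lemma cm_sum (a : bool) s : count_mem a s + count_mem (~~a) s = size s.
Proof. elim: s => //= x s <-; case: a; case: x => /=; lia. Qed.

Lemma cnt3 (a b : bool) i j k x y z :
  'C(x, i) * 'C(y, j) * 'C(z, k) <=
  cnt (nseq i a ++ nseq j b ++ nseq k a) (nseq x a ++ nseq y b ++ nseq z a).
Proof.
apply: leq_trans (cnt_nseq_cat a i _ x _).
rewrite -mulnA leq_mul2l; apply/orP; right.
apply: leq_trans (cnt_nseq_cat b j _ y _).
rewrite leq_mul2l; apply/orP; right.
by have := cnt_nseq_cat a k [::] z [::]; rewrite !cats0 /= muln1.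
Qed.

Lemma cpa (a : bool) i j k : count_mem a (nseq i a ++ nseq j (~~a) ++ nseq k a) = i + k.
Proof. by rewrite !count_cat cm_aa cm_an cm_aa. Qed.
Lemma cpn (a : bool) i j k : count_mem (~~a) (nseq i a ++ nseq j (~~a) ++ nseq k a) = j.
Proof. by rewrite !count_cat cm_na cm_aa cm_na addn0. Qed.

Theorem mainTheorem8 (p : bitseq) (n : nat) :
  0 < size p -> runs p <= 3 -> size p <= n ->
  exists w : bitseq, [/\ size w = n, optimal p w & runs w = runs p].
Proof.
move=> hp hr hn.
have [a [i [j [k [ep [hi hc]]]]]] := classify hp hr.
have sp : size p = i + j + k by rewrite ep !size_cat !size_nseq addnA.
pose t0 : n.-tuple bool := [tuple of nseq n false].
have [ts _ Hts] := @arg_maxnP _ t0 xpredT (fun t : n.-tuple bool => occ p t) isT.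
have Hw : forall w', size w' = n -> occ p w' <= occ p ts.
  by move=> w' hw; have := Hts (Tuple (introT eqP hw)) isT.
set N := count_mem a ts; set m := count_mem (~~a) ts.
have eNm : N + m = n by rewrite /N /m cm_sum size_tuple.
have wit : 0 < occ p ts.
  apply: leq_trans (Hw (nseq i a ++ nseq j (~~a) ++ nseq (n - i - j) a) _).
    rewrite occE ep; apply: leq_trans (cnt3 _ _ _ _ _ _ _ _).
    by rewrite !muln_gt0 !bin_gt0 !leqnn /=; lia.
  by rewrite !size_cat !size_nseq; lia.
have bnd := cnt_bound a p ts.
rewrite ep cpa cpn -/N -/m -ep -occE in bnd.
case: hc => [[j0 [k0 ->]]|[[jp [k0 ->]]|[jp [kp ->]]]].
-
  exists (nseq n a); split; first by rewrite size_nseq.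
  + move=> w'; rewrite size_nseq => hw.
    have := cnt_bound a p w'; rewrite ep cpa cpn j0 k0 bin0 muln1 addn0 => h.
    rewrite !occE /=.
    apply: leq_trans h _.
    have := cnt3 a (~~a) i 0 0 n 0 0; rewrite /= !cats0 !bin0 !muln1.
    apply: leq_trans; apply: leq_bin2l.
    by rewrite -hw; apply: count_size.
  + by case: n hn {Hw Hts t0 ts N m eNm wit bnd}; [rewrite sp; lia|move=> n' _; rewrite runs1].
-
  have hpos := leq_trans wit bnd; rewrite k0 addn0 in hpos.
  move: hpos; rewrite muln_gt0 !bin_gt0 => /andP[hN hm].
  exists (nseq N a ++ nseq m (~~a) ++ nseq 0 a); split.
  + by rewrite !size_cat !size_nseq addn0.
  + move=> w' hw; apply: leq_trans (Hw _ _) _.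
      by rewrite hw !size_cat !size_nseq addn0.
    apply: leq_trans bnd _; rewrite occE ep k0 addn0.
    by have := cnt3 a (~~a) i j 0 N m 0; rewrite bin0 muln1.
  + case: N hN {bnd eNm} => [|N' _]; first by lia.
    case: m hm => [|m' _]; first by lia.
    by rewrite runs2.
-
  have mb := main_bound a i k ts jp; rewrite -ep -occE -/N -/m in mb.
  pose f := fun x : 'I_N.+1 => 'C(x, i) * 'C(N - x, k).
  have [x _ Hx] := @arg_maxnP _ ord0 xpredT f isT.
  have eM : Mx i k N = f x.
    apply/eqP; rewrite eqn_leq; apply/andP; split.
      by apply/bigmax_leqP => y _; exact: Hx.
    exact: (@leq_bigmax _ f x).
  rewrite eM in mb.
  have hpos := leq_trans wit mb.
  move: hpos; rewrite /f !muln_gt0 !bin_gt0 => /andP[hm /andP[hx1 hx2]].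
  have xN : x <= N by rewrite -ltnS ltn_ord.
  exists (nseq x a ++ nseq m (~~a) ++ nseq (N - x) a); split.
  + rewrite !size_cat !size_nseq; lia.
  + move=> w' hw; apply: leq_trans (Hw _ _) _.
      by rewrite hw !size_cat !size_nseq; lia.
    apply: leq_trans mb _; rewrite occE ep /f.
    by have := cnt3 a (~~a) i j k x m (N - x); rewrite mulnCA mulnA.
  + have -> : (N - x) = (N - x).-1.+1 by lia.
    have -> : m = m.-1.+1 by lia.
    have -> : nat_of_ord x = x.-1.+1 by lia.
    by rewrite runs3.
Qed.
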